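(* There exists a sum game instance $\mathcal R=(\mathbf N,G,\mathcal P)$ that has no Nash-routing.
   Context: A routing game $(\mathbf N,G,\mathcal P)$: players $\{1,\dots,N\}$, a finite graph $G$, and for each player $i$ a nonempty finite set $\mathcal P_i$ of paths from a source $u_i$ to a destination $v_i$. A routing is $\mathbf p=[p_1,\dots,p_N]$, $p_i\in\mathcal P_i$. $C_e(\mathbf p)$ = number of players whose path uses edge $e$; $C_i(\mathbf p)=\max_{e\in p_i}C_e(\mathbf p)$; $D_i(\mathbf p)=|p_i|$ (number of edges). A sum game has player cost $pc_i(\mathbf p)=C_i(\mathbf p)+D_i(\mathbf p)$ (and social cost $C(\mathbf p)+D(\mathbf p)$, where $C=\max_eC_e$, $D=\max_i|p_i|$). A Nash-routing is a routing $\mathbf p$ with $pc_i(\mathbf p)\le pc_i(p_i';\mathbf p_{-i})$ for every player $i$ and every $p_i'\in\mathcal P_i$, where $(p_i';\mathbf p_{-i})$ replaces $p_i$ by $p_i'$. *)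

(* Defs.v *)
From mathcomp Require Import all_boot.
Set Implicit Arguments. Unset Strict Implicit. Unset Printing Implicit Defensive.

Section RoutingGame.
Variable V : finType.
Variable e : rel V.            (* adjacency relation of G (undirected: symmetric, irreflexive) *)

(* A path is given by its sequence of vertices.  [is_upath u v p] : p is a
   simple path in G from u to v. *)
Definition is_upath (u v : V) (p : seq V) : bool :=
  if p is x :: s then [&& x == u, path e x s, last x s == v & uniq p] else false.

(* The edges of a path; an undirected edge {x,y} is represented by the set [set x; y]. *)
Definition pedges (p : seq V) : seq {set V} :=
  [seq [set xy.1; xy.2] | xy <- zip p (behead p)].

Definition plen (p : seq V) : nat := size (pedges p).

Variable N : nat.

Definition routing := 'I_N -> seq V.

Definition edge_cong (r : routing) (f : {set V}) : nat :=
  #|[set i : 'I_N | f \in pedges (r i)]|.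

Definition player_cong (r : routing) (i : 'I_N) : nat :=
  \max_(f <- pedges (r i)) edge_cong r f.

Definition pc_sum (r : routing) (i : 'I_N) : nat :=
  player_cong r i + plen (r i).

Definition deviate (r : routing) (i : 'I_N) (q : seq V) : routing :=
  fun j => if j == i then q else r j.

Definition is_routing (P : 'I_N -> seq (seq V)) (r : routing) : Prop :=
  forall i, r i \in P i.

Definition sum_nash (P : 'I_N -> seq (seq V)) (r : routing) : Prop :=
  is_routing P r /\
  forall (i : 'I_N) (q : seq V), q \in P i -> pc_sum r i <= pc_sum (deviate r i q) i.

Definition wf_game (src dst : 'I_N -> V) (P : 'I_N -> seq (seq V)) : Prop :=
  symmetric e /\ irreflexive e /\
  forall i, P i != [::] /\ all (is_upath (src i) (dst i)) (P i).

End RoutingGame.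

(* Main.v *)
Require Import Defs.
From mathcomp Require Import all_boot.
From Stdlib Require Import FunctionalExtensionality.
Set Implicit Arguments. Unset Strict Implicit.

Lemma set2_eq (T : finType) (a b c d : T) :
  ([set a; b] == [set c; d]) = [&& (a==c)||(a==d), (b==c)||(b==d), (c==a)||(c==b) & (d==a)||(d==b)].
Proof. by rewrite eqEsubset !subUset !sub1set !in_set2 !andbA. Qed.

Definition eq2 (T : eqType) (a b c d : T) := [&& (a==c)||(a==d), (b==c)||(b==d), (c==a)||(c==b) & (d==a)||(d==b)].

Lemma mem_pedges (T : finType) (a b : T) (q : seq T) :
  ([set a; b] \in pedges q) = has (fun xy => eq2 a b xy.1 xy.2) (zip q (behead q)).
Proof.
rewrite /pedges; elim: (zip q (behead q)) => [|xy s IH] //=.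
by rewrite in_cons IH set2_eq.
Qed.

Definition om n (k : nat) : 'I_n.+1 := Ordinal (ltn_pmod k (ltn0Sn n)).
Lemma om_val n (i : 'I_n.+1) : om n i = i.
Proof. by apply: val_inj; rewrite /= modn_small. Qed.

Lemma edge_cong_E (T : finType) n (r : routing T n.+1) (a b : T) :
  edge_cong r [set a; b] = \sum_(0 <= k < n.+1) (has (fun xy => eq2 a b xy.1 xy.2) (zip (r (om n k)) (behead (r (om n k))))).
Proof.
rewrite /edge_cong big_mkord -sum1_card big_mkcond /=.
apply: eq_bigr => i _; rewrite inE om_val mem_pedges; by case: has.
Qed.

Lemma player_cong_E (T : finType) n (r : routing T n.+1) i :
  player_cong r i = \max_(xy <- zip (r i) (behead (r i))) edge_cong r [set xy.1; xy.2].
Proof. by rewrite /player_cong /pedges big_map. Qed.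

Definition pcC (T : finType) n (r : routing T n.+1) (i : 'I_n.+1) : nat :=
  foldr (fun xy m => maxn (foldr (fun k s => (has (fun uv => eq2 xy.1 xy.2 uv.1 uv.2) (zip (r (om n k)) (behead (r (om n k)))) : nat) + s) 0 (iota 0 n.+1)) m) 0 (zip (r i) (behead (r i)))
  + size (zip (r i) (behead (r i))).

Lemma pc_sum_E (T : finType) n (r : routing T n.+1) i : pc_sum r i = pcC r i.
Proof.
rewrite /pc_sum player_cong_E /plen /pedges size_map /pcC; congr (_ + _).
rewrite unlock /reducebig /=; elim: (zip (r i) (behead (r i))) => [|xy s IH] //=.
by rewrite IH edge_cong_E unlock.
Qed.

Definition VV := 'I_30.
Definition E : seq (nat*nat) := [:: (0, 5); (0, 10); (0, 11); (0, 12); (1, 5); (1, 6); (1, 12); (1, 16); (2, 7); (2, 10); (3, 5); (3, 6); (3, 7); (3, 8); (4, 6); (4, 8); (4, 9); (4, 11); (5, 16); (6, 24); (8, 13); (8, 14); (9, 13); (9, 15); (9, 17); (14, 23); (15, 29); (17, 18); (18, 19); (19, 20); (20, 21); (21, 22); (22, 23); (24, 25); (25, 26); (26, 27); (27, 28); (28, 29)].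
Definition ee : rel VV := fun x y => (pair (val x) (val y) \in E) || (pair (val y) (val x) \in E).
Definition mk (s : seq nat) : seq VV := map (om 29) s.
Definition PL : seq (seq (seq VV)) := map (map mk)
 [:: [:: [:: 10; 0; 5; 1; 6; 4; 9; 13]; [:: 10; 2; 7; 3; 8; 13]];
     [:: [:: 11; 4; 9; 17; 18; 19; 20; 21; 22; 23; 14]; [:: 11; 0; 5; 16; 1; 6; 3; 8; 14]];
     [:: [:: 12; 0; 5; 3; 8; 4; 9; 15]; [:: 12; 1; 6; 24; 25; 26; 27; 28; 29; 15]];
     [:: [:: 0; 5]]; [:: [:: 2; 7]]; [:: [:: 2; 7]]; [:: [:: 2; 7]]; [:: [:: 2; 7]]; [:: [:: 3; 8]]; [:: [:: 3; 8]]].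
Definition PP (i : 'I_10) : seq (seq VV) := nth [::] PL i.
Definition g (a b c : bool) : routing VV 10 := fun i =>
  nth [::] (PP i) (if val i == 0 then a else if val i == 1 then b else if val i == 2 then c else false).


Definition src (i : 'I_10) : VV := head (om 29 0) (nth [::] (PP i) 0).
Definition dst (i : 'I_10) : VV := last (om 29 0) (nth [::] (PP i) 0).

Lemma no_ne a b c : exists i : 'I_10, exists q, q \in PP i /\
   pcC (deviate (g a b c) i q) i < pcC (g a b c) i.
Proof.
case: a; case: b; case: c.
- exists (om 9 1), (nth [::] (PP (om 9 1)) 0); split; vm_compute; reflexivity.
- exists (om 9 1), (nth [::] (PP (om 9 1)) 0); split; vm_compute; reflexivity.
- exists (om 9 0), (nth [::] (PP (om 9 0)) 0); split; vm_compute; reflexivity.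
- exists (om 9 2), (nth [::] (PP (om 9 2)) 1); split; vm_compute; reflexivity.
- exists (om 9 2), (nth [::] (PP (om 9 2)) 0); split; vm_compute; reflexivity.
- exists (om 9 0), (nth [::] (PP (om 9 0)) 1); split; vm_compute; reflexivity.
- exists (om 9 1), (nth [::] (PP (om 9 1)) 1); split; vm_compute; reflexivity.
- exists (om 9 1), (nth [::] (PP (om 9 1)) 1); split; vm_compute; reflexivity.
Qed.

Lemma PP_size (i : 'I_10) : 3 <= i -> size (PP i) = 1.
Proof.
case: i => [[|[|[|[|[|[|[|[|[|[|k]]]]]]]]]] Hi] //= _; try (vm_compute; reflexivity).
all: try by [].
Qed.

Lemma PP_size2 (i : 'I_10) : size (PP i) <= 2.
Proof.
case: i => [[|[|[|[|[|[|[|[|[|[|k]]]]]]]]]] Hi]; try (vm_compute; reflexivity).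
all: try by [].
Qed.

Lemma PP_ne (i : 'I_10) : [::] \notin PP i.
Proof.
case: i => [[|[|[|[|[|[|[|[|[|[|k]]]]]]]]]] Hi]; try (vm_compute; reflexivity).
all: try by [].
Qed.

Lemma wf_i (i : 'I_10) : PP i != [::] /\ all (is_upath ee (src i) (dst i)) (PP i).
Proof.
case: i => [[|[|[|[|[|[|[|[|[|[|k]]]]]]]]]] Hi]; try (split; vm_compute; reflexivity).
all: try by [].
Qed.

Lemma pick (s : seq (seq VV)) x : x \in s -> size s <= 2 -> [::] \notin s ->
  x = nth [::] s (x == nth [::] s 1).
Proof.
case: s => [|p0 [|p1 [|]]] //=.
- rewrite inE => /eqP -> _; rewrite inE => hn.
  by rewrite eq_sym (negbTE hn).
- rewrite !inE => /orP [/eqP->|/eqP->] _ _; last by rewrite eqxx.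
  by case: eqP => //= ->.
Qed.

Theorem mainTheorem8 :
  exists (V : finType) (e : rel V) (N : nat) (src dst : 'I_N -> V)
         (P : 'I_N -> seq (seq V)),
    wf_game e src dst P /\ ~ (exists r : routing V N, sum_nash P r).
Proof.
exists VV, ee, 10, src, dst, PP; split.
  split; first by move=> x y; rewrite /ee orbC.
  split; last exact: wf_i.
  have hE : all (fun p => p.1 != p.2) E by vm_compute.
  move=> x; rewrite /ee orbb; apply/negP => /(allP hE) /=; by rewrite eqxx.
move=> [r [hr hN]].
set a := r (om 9 0) == nth [::] (PP (om 9 0)) 1.
set b := r (om 9 1) == nth [::] (PP (om 9 1)) 1.
set c := r (om 9 2) == nth [::] (PP (om 9 2)) 1.
have Hg : r = g a b c.
  apply: functional_extensionality => i.
  rewrite {1}(pick (hr i) (PP_size2 i) (PP_ne i)) /g.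
  case: i hr => [[|[|[|k]]] Hi] hr /=.
  - by have -> : Ordinal Hi = om 9 0 by apply: val_inj.
  - by have -> : Ordinal Hi = om 9 1 by apply: val_inj.
  - by have -> : Ordinal Hi = om 9 2 by apply: val_inj.
  - rewrite [nth [::] (PP _) 1]nth_default; last by rewrite PP_size.
    have hn : r (Ordinal Hi) != [::].
      by apply: contraNneq (PP_ne (Ordinal Hi)) => <-; apply: hr.
    by rewrite (negbTE hn).
rewrite Hg in hN; have [i [q [hq hlt]]] := no_ne a b c.
by have := hN i q hq; rewrite !pc_sum_E leqNgt hlt.
Qed.
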